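(* Let $\Lambda\subset\mathbb{R}^3$ be a closed set of Lebesgue measure zero and let $w\in C^\infty(\mathbb{R}^3\setminus\Lambda)$ be such that $e^w\in L_{1}(\mathbb{R}^3)$ and there exist $K>0$, $q>0$ with $K^{-1}d_0(y,\Lambda)^{-q}\leq e^{w(y)}\leq K d_0(y,\Lambda)^{-q}$ for all $y\in\mathbb{R}^3\setminus\Lambda$. Then for every $x\in\mathbb{R}^3\setminus\Lambda$, $$\big((-\Delta)^{1/2}w\big)(x)\geq e^{-w(x)}\big((-\Delta)^{1/2}e^w\big)(x).$$
   Context: $d_0$ is the Euclidean distance. For $0<\alpha<1$, $L_{2\alpha}(\mathbb{R}^3)=\{h:\int_{\mathbb{R}^3}\frac{|h(x)|}{1+|x|^{3+2\alpha}}dx<\infty\}$ (here $L_1$ means the case $\alpha=1/2$). The fractional Laplacian is $(-\Delta)^{\alpha}h(x)=-d_{3,\alpha}\int_{\mathbb{R}^3}\frac{h(x+y)+h(x-y)-2h(x)}{|y|^{3+2\alpha}}dy$ for $h\in L_{2\alpha}(\mathbb{R}^3)$, with $d_{3,\alpha}>0$ the normalizing constant making the Fourier symbol $|\xi|^{2\alpha}$. *)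

(* Defs.v *)
From HB Require Import structures.
From mathcomp Require Import all_boot all_order all_algebra.
From mathcomp Require Import all_classical all_reals all_analysis.
Set Implicit Arguments. Unset Strict Implicit. Unset Printing Implicit Defensive.
Import Order.TTheory GRing.Theory Num.Theory.
Import numFieldNormedType.Exports.
Local Open Scope classical_set_scope.
Local Open Scope ring_scope.

Section Defs.
Variable R : realType.

Definition R3 := ((R * R) * R)%type.

Definition enorm (y : R3) : R :=
  Num.sqrt (y.1.1 ^+ 2 + y.1.2 ^+ 2 + y.2 ^+ 2).

Definition d0 (x y : R3) : R := enorm (x - y).

Definition dist_set (y : R3) (L : set R3) : R := inf [set d0 y z | z in L].

Definition leb3 := (((@lebesgue_measure R) \x (@lebesgue_measure R))
                     \x (@lebesgue_measure R))%E.

Fixpoint iter_deriv (vs : seq R3) (f : R3 -> R) : R3 -> R :=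
  match vs with
  | [::] => f
  | v :: vs' => fun x => 'D_v (iter_deriv vs' f) x
  end.

Definition smooth_on (U : set R3) (f : R3 -> R) : Prop :=
  open U /\
  (forall (vs : seq R3) (v x : R3), U x -> derivable (iter_deriv vs f) x v) /\
  (forall (vs : seq R3) (x : R3), U x -> {for x, continuous (iter_deriv vs f)}).

(* h in L_{2 alpha}(R^3) for alpha = 1/2, for h defined off the null set L:
   int |h(x)| / (1 + |x|^4) dx < oo *)
Definition L1w (L : set R3) (h : R3 -> R) : Prop :=
  leb3.-integrable (~` L) (fun x => (h x / (1 + enorm x ^+ 4))%:E).

(* d_{3,1/2} = 1/(2 pi^2), so that the symbol of (-Delta)^{1/2} is |xi| *)
Definition d3half : R := (2 * pi ^+ 2)^-1.

(* (-Delta)^{1/2} h (x), for h defined off the null set L: integrate over the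
   y with x+y, x-y off L (a conull set) *)
Definition halflap (L : set R3) (h : R3 -> R) (x : R3) : \bar R :=
  ((- d3half)%:E *
   \int[leb3]_(y in [set y | ~ L (x + y)%R /\ ~ L (x - y)%R])
      ((h (x + y) + h (x - y) - 2 * h x) / enorm y ^+ 4)%:E)%E.

End Defs.

(* Main.v *)
Require Import Defs.
From HB Require Import structures.
From mathcomp Require Import all_boot all_order all_algebra all_classical all_reals all_analysis.
Import Order.TTheory GRing.Theory Num.Theory.
From mathcomp Require Import lra ring.
Local Open Scope ereal_scope.
Import HBNNSimple.
Set Implicit Arguments. Unset Strict Implicit.

Definition NN d (T : measurableType d) (R : realType) (mu : measure T R)
  (f : T -> \bar R) := ereal_sup [set sintegral mu h |
  h in [set h : {nnsfun T >-> R} | forall x, (h x)%:E <= f x]].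

Lemma integral_NN d (T : measurableType d) (R : realType) (mu : measure T R)
  (D : set T) (f : T -> \bar R) :
  \int[mu]_(x in D) f x = NN mu ((f \_ D)^\+) - NN mu ((f \_ D)^\-).
Proof. by []. Qed.

Lemma NN_le d (T : measurableType d) (R : realType) (mu : measure T R)
  (f g : T -> \bar R) : (forall x, f x <= g x) -> NN mu f <= NN mu g.
Proof.
move=> fg; apply: ge_ereal_sup => _ [h hf <-]; apply: ereal_sup_ubound.
by exists h => // x; exact: le_trans (hf x) (fg x).
Qed.

Lemma NN_scale_le d (T : measurableType d) (R : realType) (mu : measure T R)
  (f : T -> \bar R) (k : R) : (0 < k)%R ->
  NN mu (fun x => k%:E * f x) <= k%:E * NN mu f.
Proof.
move=> k0; have k0' : (0 <= k^-1)%R by rewrite invr_ge0 ltW.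
apply: ge_ereal_sup => _ [h hf <-].
have -> : sintegral mu h = k%:E * sintegral mu (scale_nnsfun h k0').
  have -> : sintegral mu (scale_nnsfun h k0') = k^-1%:E * sintegral mu h by exact: sintegralrM.
  by rewrite muleA -EFinM mulfV ?gt_eqF // mul1e.
rewrite lee_pmul2l ?lte_fin //; apply: ereal_sup_ubound; exists (scale_nnsfun h k0') => //= x.
have := hf x; rewrite /= -(@lee_pmul2l _ (k^-1)%:E) ?lte_fin ?invr_gt0 //.
by rewrite muleA -!EFinM mulVf ?gt_eqF // mul1e.
Qed.

Lemma NN_scale d (T : measurableType d) (R : realType) (mu : measure T R)
  (f : T -> \bar R) (k : R) : (0 < k)%R ->
  NN mu (fun x => k%:E * f x) = k%:E * NN mu f.
Proof.
move=> k0; apply/eqP; rewrite eq_le NN_scale_le //=.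
have ki : (0 < k^-1)%R by rewrite invr_gt0.
have := NN_scale_le mu (fun x => k%:E * f x) ki.
have -> : (fun x => k^-1%:E * (k%:E * f x)) = f.
  by apply/funext => x; rewrite muleA -EFinM mulVf ?gt_eqF // mul1e.
rewrite -(@lee_pmul2l _ k%:E) ?lte_fin // muleA -EFinM mulfV ?gt_eqF // mul1e.
exact: id.
Qed.
Lemma scale_sub (R : realType) (c : R) (a b : \bar R) : (0 < c)%R -> c%:E * (a - b) = c%:E*a - c%:E*b.
Proof.
move=> c0; have hc : 0 < c%:E by rewrite lte_fin.
case: a => [a| |]; case: b => [b| |] //=.
 by rewrite -EFinD -!EFinM mulrDr mulrN.
all: rewrite ?addeNy ?addNye ?addey ?addye //.
all: rewrite !(muleC c%:E) ?(gt0_mulye hc) ?(gt0_mulNye hc) //=.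
all: rewrite ?addeNy ?addNye ?addey ?addye //.
Qed.

Lemma int_le_scale d (T : measurableType d) (R : realType) (mu : measure T R)
  (D : set T) (f g : T -> \bar R) (c : R) : (0 < c)%R ->
  (forall y, f y <= c%:E * g y) ->
  \int[mu]_(x in D) f x <= c%:E * \int[mu]_(x in D) g x.
Proof.
move=> c0 fg; rewrite !integral_NN scale_sub // -!NN_scale //.
have FG : forall x, (f \_ D) x <= c%:E * (g \_ D) x.
  by move=> x; rewrite /patch; case: ifP => _ //; rewrite mule0.
have cf : (c%:E : \bar R) \is a fin_num by [].
have c0' : (0 <= c%:E :> \bar R) by rewrite lee_fin ltW.
apply: leeB; apply: NN_le => x.
  rewrite !funeposE maxe_pMr // mule0; apply: le_max2 => //.
rewrite !funenegE maxe_pMr // mule0; apply: le_max2 => //.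
by rewrite muleN leeN2.
Qed.

Import numFieldNormedType.Exports.
Local Close Scope ereal_scope.
Local Open Scope classical_set_scope.
Local Open Scope ring_scope.

Lemma ptwise (R : realType) (w0 a b n : R) :
  0 <= n ->
  (a + b - 2 * w0) / n <= expR (- w0) * ((expR a + expR b - 2 * expR w0) / n).
Proof.
move=> n0; rewrite mulrA; apply: ler_wpM2r; first by rewrite invr_ge0.
have h1 := expR_ge1Dx (a - w0); have h2 := expR_ge1Dx (b - w0).
rewrite !expRD in h1 h2.
have E : expR w0 != 0 by rewrite gt_eqF // expR_gt0.
have -> : expR (- w0) * (expR a + expR b - 2 * expR w0) =
   expR a * expR (- w0) + expR b * expR (- w0) - 2.
  rewrite expRN; field; exact: E.
lra.
Qed.

Theorem proposition5p1 (R : realType) (L : set (R3 R)) (w : R3 R -> R) :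
  closed L ->
  @leb3 R L = 0%E ->
  smooth_on (~` L) w ->
  L1w L (fun y => expR (w y)) ->
  (exists K q : R, 0 < K /\ 0 < q /\
     forall y, ~ L y ->
       K^-1 * powR (dist_set y L) (- q) <= expR (w y) /\
       expR (w y) <= K * powR (dist_set y L) (- q)) ->
  forall x, ~ L x ->
    ((expR (- w x))%:E * halflap L (fun y => expR (w y)) x
       <= halflap L w x)%E.
Proof.
move=> _ _ _ _ _ x _.
rewrite /halflap muleCA.
have d0 : 0 < d3half R.
  by rewrite /d3half invr_gt0 mulr_gt0 // exprn_gt0 // pi_gt0.
rewrite !EFinN !mulNe leeN2 lee_pmul2l ?lte_fin //.
apply: int_le_scale; first by rewrite expR_gt0.
move=> y; rewrite -EFinM lee_fin; apply: ptwise.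
by rewrite exprn_ge0 // sqrtr_ge0.
Qed.
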